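(* Let $A=(S,f_c,f_d)$ be any self-similar cellular automaton with $\{0,1\}\subseteq S$, and let $k_0\ge 0$. Let $\mathcal{C}$ be the set of configurations $c:\mathbb{Z}\to\{0,1\}$ that are either the all-zero configuration $0^\infty$ or have exactly one cell equal to $1$, that cell having positive index. Then it is impossible that, for every $c\in\mathcal{C}$, the state of cycle $(0,k_0)$ is deterministic for initial configuration $c$ and its common value equals $1$ when $c\neq 0^\infty$ and equals $0$ when $c=0^\infty$.
   Context: A self-similar cellular automaton is a triple $A=(S,f_c,f_d)$ with $S$ a finite set of states and $f_c,f_d:S^3\to S$. Cells are indexed by $j\in\mathbb{Z}$; cell $j$ has cycles $[k/2^j,(k+1)/2^j)$, and the $k$-th cycle of cell $j$ is identified with the pair $(j,k)$. The automaton is started at time $0$; the set of cycles is $C=\{(i,k): i\in\mathbb{Z},\ k\in\mathbb{Z}_{\ge 0}\}$. Given an initial configuration $c:\mathbb{Z}\to S$, an evolution of $A$ from $c$ is a map $s:C\to S$ with $s(i,0)=c(i)$ for all $i$ and, for all $(i,k)$ with $k\ge1$, $s(i,k)=f_c\big(s(i-1,\lfloor (k-1)/2\rfloor),s(i,k-1),s(i+1,2k-1)\big)$ if $k$ is even and $s(i,k)=f_d(\text{same arguments})$ if $k$ is odd. The state of cycle $(i_0,k_0)$ is deterministic for initial configuration $c$ if $s(i_0,k_0)$ takes the same value for all evolutions $s$ of $A$ from $c$ (its common value). *)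

(* Defs.v *)
From Stdlib Require Import ZArith.
From mathcomp Require Import all_boot.

Set Implicit Arguments.
Unset Strict Implicit.
Unset Printing Implicit Defensive.

Record SSCA := mkSSCA {
  state : finType;
  f_c : state -> state -> state -> state;
  f_d : state -> state -> state -> state
}.

Definition is_evolution (A : SSCA) (c : Z -> state A) (s : Z -> nat -> state A) : Prop :=
  (forall i : Z, s i O = c i) /\
  (forall (i : Z) (k : nat), (leq 1 k) ->
     let args := (s (Z.sub i 1) (divn (subn k 1) 2), s i (subn k 1), s (Z.add i 1) (subn (muln 2 k) 1)) in
     s i k = (if ~~ odd k then @f_c A args.1.1 args.1.2 args.2
              else @f_d A args.1.1 args.1.2 args.2)).

Definition deterministic_with_value (A : SSCA) (c : Z -> state A)
    (i0 : Z) (k0 : nat) (v : state A) : Prop :=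
  (exists s, is_evolution c s /\ s i0 k0 = v) /\
  (forall s, is_evolution c s -> s i0 k0 = v).

(* Configurations over {0,1}, where zero and one are the (distinct) states 0 and 1 of S. *)
Definition all_zero_config (S : Type) (zero : S) : Z -> S := fun _ => zero.
Definition single_one_config (S : Type) (zero one : S) (p : Z) : Z -> S :=
  fun i => if Z.eqb i p then one else zero.

(* Main.v *)
Require Import Defs.
From Stdlib Require Import ZArith.
From Stdlib Require Import ClassicalEpsilon Classical Cantor Lia List.
From mathcomp Require Import all_boot.

Definition infp (P : nat -> Prop) := forall m : nat, exists p, (m <= p)%N /\ P p.

Lemma pigeon (T : finType) (P : nat -> Prop) (f : nat -> T) :
  infp P -> exists v, infp (fun p => P p /\ f p = v).
Proof.
move=> HP; apply: NNPP => Hn.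
have Hb : forall v : T, exists m : nat, forall p, (m <= p)%N -> P p -> f p <> v.
  move=> v; apply: NNPP => Hv; apply: Hn; exists v => m.
  apply: NNPP => Hm; apply: Hv; exists m => p Hp HPp Hf; apply: Hm; exists p; auto.
pose mv v := epsilon (inhabits 0%N) (fun m => forall p, (m <= p)%N -> P p -> f p <> v).
have Hmv : forall v p, (mv v <= p)%N -> P p -> f p <> v.
  move=> v; exact: (epsilon_spec (inhabits 0%N) _ (Hb v)).
have [p [Hp HPp]] := HP (\max_(v : T) mv v).
apply: (Hmv (f p) p) => //; apply: leq_trans Hp; exact: leq_bigmax.
Qed.

Definition gq (n : nat) : Z * nat :=
  let (x, k) := Cantor.of_nat n in let (a, b) := Cantor.of_nat x in
  (Z.of_nat a - Z.of_nat b, k)%Z.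
Definition hq (q : Z * nat) : nat :=
  Cantor.to_nat (Cantor.to_nat (Z.to_nat q.1, Z.to_nat (- q.1)), q.2).

Lemma ghq q : gq (hq q) = q.
Proof.
case: q => i k; rewrite /gq /hq !Cantor.cancel_of_to /=; f_equal; lia.
Qed.

Section Compact.
Variables (T : finType) (t0 : T) (e : nat -> Z -> nat -> T).

Definition vsel (n : nat) (P : nat -> Prop) : T :=
  epsilon (inhabits t0) (fun v => infp (fun p => P p /\ e p (gq n).1 (gq n).2 = v)).

Fixpoint Pseq (n : nat) : nat -> Prop :=
  match n with
  | O => fun _ => True
  | S n => fun p => Pseq n p /\ e p (gq n).1 (gq n).2 = vsel n (Pseq n)
  end.

Lemma inf_Pseq n : infp (Pseq n).
Proof.
elim: n => [|n IH] /=; first by move=> m; exists m.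
apply: (epsilon_spec (inhabits t0) (fun v => infp (fun p => Pseq n p /\ _ = v))).
exact: pigeon.
Qed.

Lemma Pseq_mono n N p : (n <= N)%N -> Pseq N p -> Pseq n p.
Proof.
elim: N => [|N IH]; first by rewrite leqn0 => /eqP ->.
rewrite leq_eqVlt => /orP [/eqP -> //|Hn] /= [H _]; exact: IH.
Qed.

Definition slim (i : Z) (k : nat) : T := vsel (hq (i, k)) (Pseq (hq (i, k))).

Lemma Pseq_agree N p i k : Pseq N p -> (hq (i, k) < N)%N -> e p i k = slim i k.
Proof.
move=> HP Hl; have /= [_ H] := @Pseq_mono (hq (i, k)).+1 N p Hl HP.
by rewrite ghq /= in H.
Qed.

Lemma compact (F : list (Z * nat)) m :
  exists p, (m <= p)%N /\ forall q, List.In q F -> e p q.1 q.2 = slim q.1 q.2.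
Proof.
pose N := foldr maxn 0%N (map (fun q => (hq q).+1) F).
have HN : forall q, List.In q F -> (hq q < N)%N.
  rewrite /N; clear N; elim: F => [|a F IH] //= q [->|Hq].
    by rewrite leq_max leqnn.
  by rewrite leq_max (IH q Hq) orbT.
have [p [Hp HP]] := inf_Pseq N m.
exists p; split => // -[i k] Hq /=. move: (HN _ Hq) => Hl; apply: (@Pseq_agree N p i k HP Hl).
Qed.
End Compact.

Theorem mainTheorem4 (A : SSCA) (zero one : state A) (Hzo : zero <> one) (k0 : nat) :
  ~ ( deterministic_with_value (all_zero_config zero) 0%Z k0 zero /\
      (forall p : Z, (0 < p)%Z ->
         deterministic_with_value (single_one_config zero one p) 0%Z k0 one) ).
Proof.
move=> [[_ Hz] Hone].
pose P p s := is_evolution (single_one_config zero one (Z.of_nat p.+1)) s /\ s 0%Z k0 = one.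
pose e p := epsilon (inhabits (fun (_ : Z) (_ : nat) => zero)) (P p).
have He : forall p, P p (e p).
  move=> p; apply: epsilon_spec.
  have [[s [Hs1 Hs2]] _] := Hone (Z.of_nat p.+1) ltac:(lia).
  by exists s.
pose s := @slim (state A) zero e.
apply: Hzo; rewrite -(Hz s).
- have [p [_ Hp]] := @compact (state A) zero e ((0%Z, k0) :: nil) 0.
  have /= H1 := Hp (0%Z, k0) ltac:(simpl; tauto).
  rewrite /s -H1; by case: (He p).
split.
- move=> i.
  have [p [Hm Hp]] := @compact (state A) zero e ((i, 0%N) :: nil) (Z.to_nat (Z.abs i)).
  have /= H1 := Hp (i, 0%N) ltac:(simpl; tauto).
  rewrite /s -H1.
  case: (He p) => [[H0 _] _]; rewrite H0 /single_one_config /all_zero_config.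
  move/leP: Hm => Hm.
  case: (Z.eqb_spec i (Z.of_nat p.+1)) => // Hi; lia.
- move=> i k Hk.
  have [p [_ Hp]] := @compact (state A) zero e
    ((i, k) :: (Z.sub i 1, divn (subn k 1) 2) :: (i, subn k 1) :: (Z.add i 1, subn (muln 2 k) 1) :: nil) 0.
  case: (He p) => [[_ Hev] _].
  have := Hev i k Hk.
  have /= H1 := Hp (i, k) ltac:(simpl; tauto).
  have /= H2 := Hp (Z.sub i 1, divn (subn k 1) 2) ltac:(simpl; tauto).
  have /= H3 := Hp (i, subn k 1) ltac:(simpl; tauto).
  have /= H4 := Hp (Z.add i 1, subn (muln 2 k) 1) ltac:(simpl; tauto).
  by rewrite /s /= H1 H2 H3 H4.
Qed.
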